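(* (i) Every semi-magic Sudoku board can be transformed by an element of $H_\Gamma$ into a semi-magic Sudoku board whose gnomon is the standard gnomon. (ii) There are exactly sixteen $H_\Gamma$-nests of semi-magic Sudoku boards, and each $H_\Gamma$-nest contains exactly one semi-magic Sudoku board whose gnomon is the standard gnomon.
   Context: A Sudoku board is a $9\times 9$ array with entries from $\{0,\dots,8\}$, rows indexed $1,\dots,9$ top to bottom and columns $1,\dots,9$ left to right, such that every row, every column, and every $3\times3$ block (rows $3a+1,\dots,3a+3$, columns $3b+1,\dots,3b+3$) contains each symbol exactly once. A semi-magic Sudoku board is a Sudoku board in which, in every block, each of the three rows and each of the three columns of the block has entry sum $12$. Bands are the three horizontal strips of blocks (rows 1–3, 4–6, 7–9); pillars are the three vertical strips (columns 1–3, 4–6, 7–9). The gnomon of a board is the union of its first band and its first pillar (rows 1–3 together with columns 1–3). The standard gnomon is the one with rows $1,2,3$ equal to $(0,4,8,7,2,3,5,6,1)$, $(5,6,1,0,4,8,7,2,3)$, $(7,2,3,5,6,1,0,4,8)$ and with the entries in columns $1,2,3$ of rows $4,\dots,9$ equal to $(8,0,4)$, $(1,5,6)$, $(3,7,2)$, $(4,8,0)$, $(6,1,5)$, $(2,3,7)$ respectively. $H_\Gamma$ is the group of cell rearrangements (acting on boards by moving entries) generated by the transpose, all swaps of two rows within the same band, all swaps of two columns within the same pillar, the swap of pillars 2 and 3, and the swap of bands 2 and 3. Two semi-magic boards are in the same $H_\Gamma$-nest if one can be obtained from the other by an element of $H_\Gamma$. *)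

(* Defs.v *)
From mathcomp Require Import all_boot all_order all_fingroup.
Set Implicit Arguments. Unset Strict Implicit. Unset Printing Implicit Defensive.



(* Cells: (row, column), both indexed 0..8 (paper's 1..9 shifted by one).
   Entries: symbols 0..8. *)
Definition cell := ('I_9 * 'I_9)%type.
Definition board := {ffun cell -> 'I_9}.

Definition bcell (a b i j : 'I_3) : cell := (inord (3 * a + i), inord (3 * b + j)).

Definition sudoku (B : board) : bool :=
  [&& [forall r : 'I_9, forall s : 'I_9, #|[set c : 'I_9 | B (r, c) == s]| == 1],
      [forall c : 'I_9, forall s : 'I_9, #|[set r : 'I_9 | B (r, c) == s]| == 1] &
      [forall a : 'I_3, forall b : 'I_3, forall s : 'I_9,
         #|[set p : 'I_3 * 'I_3 | B (bcell a b p.1 p.2) == s]| == 1]].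

Definition semimagic (B : board) : bool :=
  [&& sudoku B,
      [forall a : 'I_3, forall b : 'I_3, forall i : 'I_3,
         \sum_(j < 3) nat_of_ord (B (bcell a b i j)) == 12] &
      [forall a : 'I_3, forall b : 'I_3, forall j : 'I_3,
         \sum_(i < 3) nat_of_ord (B (bcell a b i j)) == 12]].

Definition std_rows : seq (seq nat) :=
  [:: [:: 0; 4; 8; 7; 2; 3; 5; 6; 1];
      [:: 5; 6; 1; 0; 4; 8; 7; 2; 3];
      [:: 7; 2; 3; 5; 6; 1; 0; 4; 8];
      [:: 8; 0; 4]; [:: 1; 5; 6]; [:: 3; 7; 2];
      [:: 4; 8; 0]; [:: 6; 1; 5]; [:: 2; 3; 7]].

Definition std_entry (r c : nat) : nat := nth 0 (nth [::] std_rows r) c.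

Definition std_gnomon (B : board) : bool :=
  [forall r : 'I_9, forall c : 'I_9,
     ((r < 3) || (c < 3)) ==> (nat_of_ord (B (r, c)) == std_entry r c)].

Definition transp_fun (x : cell) : cell := (x.2, x.1).
Lemma transp_inj : injective transp_fun.
Proof. by move=> [a b] [c d] /= [-> ->]. Qed.
Definition transp : {perm cell} := perm transp_inj.

Definition rowf (s : {perm 'I_9}) (x : cell) : cell := (s x.1, x.2).
Lemma rowf_inj s : injective (rowf s).
Proof. by move=> [a b] [c d] [/perm_inj -> ->]. Qed.
Definition rowact s : {perm cell} := perm (@rowf_inj s).

Definition colf (s : {perm 'I_9}) (x : cell) : cell := (x.1, s x.2).
Lemma colf_inj s : injective (colf s).
Proof. by move=> [a b] [c d] [-> /perm_inj ->]. Qed.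
Definition colact s : {perm cell} := perm (@colf_inj s).

Definition swap23 : {perm 'I_9} :=
  (tperm (inord 3) (inord 6) * tperm (inord 4) (inord 7) * tperm (inord 5) (inord 8))%g.

Definition HGamma_gens : {set {perm cell}} :=
  [set transp]
  :|: [set rowact (tperm p.1 p.2) | p : cell & p.1 %/ 3 == p.2 %/ 3]
  :|: [set colact (tperm p.1 p.2) | p : cell & p.1 %/ 3 == p.2 %/ 3]
  :|: [set colact swap23; rowact swap23].

Definition HGamma : {group {perm cell}} := <<HGamma_gens>>%G.

(* action on boards: the entry in cell x is moved to cell g x *)
Definition bact (g : {perm cell}) (B : board) : board := [ffun x => B ((g^-1)%g x)].

Definition nest (B : board) : {set board} := [set bact g B | g in HGamma].

Definition semimagic_boards : {set board} := [set B | semimagic B].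

(* Main.v *)
Require Import Defs.
From mathcomp Require Import all_boot all_fingroup zify.
Set Implicit Arguments. Unset Strict Implicit. Unset Printing Implicit Defensive.
Definition sqs : seq (seq nat) := [:: [:: 0; 4; 8; 5; 6; 1; 7; 2; 3];
  [:: 0; 4; 8; 7; 2; 3; 5; 6; 1];
  [:: 0; 5; 7; 4; 6; 2; 8; 1; 3];
  [:: 0; 5; 7; 8; 1; 3; 4; 6; 2];
  [:: 0; 7; 5; 4; 2; 6; 8; 3; 1];
  [:: 0; 7; 5; 8; 3; 1; 4; 2; 6];
  [:: 0; 8; 4; 5; 1; 6; 7; 3; 2];
  [:: 0; 8; 4; 7; 3; 2; 5; 1; 6];
  [:: 1; 3; 8; 5; 7; 0; 6; 2; 4];
  [:: 1; 3; 8; 6; 2; 4; 5; 7; 0];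
  [:: 1; 5; 6; 3; 7; 2; 8; 0; 4];
  [:: 1; 5; 6; 8; 0; 4; 3; 7; 2];
  [:: 1; 6; 5; 3; 2; 7; 8; 4; 0];
  [:: 1; 6; 5; 8; 4; 0; 3; 2; 7];
  [:: 1; 8; 3; 5; 0; 7; 6; 4; 2];
  [:: 1; 8; 3; 6; 4; 2; 5; 0; 7];
  [:: 2; 3; 7; 4; 8; 0; 6; 1; 5];
  [:: 2; 3; 7; 6; 1; 5; 4; 8; 0];
  [:: 2; 4; 6; 3; 8; 1; 7; 0; 5];
  [:: 2; 4; 6; 7; 0; 5; 3; 8; 1];
  [:: 2; 6; 4; 3; 1; 8; 7; 5; 0];
  [:: 2; 6; 4; 7; 5; 0; 3; 1; 8];
  [:: 2; 7; 3; 4; 0; 8; 6; 5; 1];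
  [:: 2; 7; 3; 6; 5; 1; 4; 0; 8];
  [:: 3; 1; 8; 2; 6; 4; 7; 5; 0];
  [:: 3; 1; 8; 7; 5; 0; 2; 6; 4];
  [:: 3; 2; 7; 1; 6; 5; 8; 4; 0];
  [:: 3; 2; 7; 8; 4; 0; 1; 6; 5];
  [:: 3; 7; 2; 1; 5; 6; 8; 0; 4];
  [:: 3; 7; 2; 8; 0; 4; 1; 5; 6];
  [:: 3; 8; 1; 2; 4; 6; 7; 0; 5];
  [:: 3; 8; 1; 7; 0; 5; 2; 4; 6];
  [:: 4; 0; 8; 2; 7; 3; 6; 5; 1];
  [:: 4; 0; 8; 6; 5; 1; 2; 7; 3];
  [:: 4; 2; 6; 0; 7; 5; 8; 3; 1];
  [:: 4; 2; 6; 8; 3; 1; 0; 7; 5];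
  [:: 4; 6; 2; 0; 5; 7; 8; 1; 3];
  [:: 4; 6; 2; 8; 1; 3; 0; 5; 7];
  [:: 4; 8; 0; 2; 3; 7; 6; 1; 5];
  [:: 4; 8; 0; 6; 1; 5; 2; 3; 7];
  [:: 5; 0; 7; 1; 8; 3; 6; 4; 2];
  [:: 5; 0; 7; 6; 4; 2; 1; 8; 3];
  [:: 5; 1; 6; 0; 8; 4; 7; 3; 2];
  [:: 5; 1; 6; 7; 3; 2; 0; 8; 4];
  [:: 5; 6; 1; 0; 4; 8; 7; 2; 3];
  [:: 5; 6; 1; 7; 2; 3; 0; 4; 8];
  [:: 5; 7; 0; 1; 3; 8; 6; 2; 4];
  [:: 5; 7; 0; 6; 2; 4; 1; 3; 8];
  [:: 6; 1; 5; 2; 3; 7; 4; 8; 0];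
  [:: 6; 1; 5; 4; 8; 0; 2; 3; 7];
  [:: 6; 2; 4; 1; 3; 8; 5; 7; 0];
  [:: 6; 2; 4; 5; 7; 0; 1; 3; 8];
  [:: 6; 4; 2; 1; 8; 3; 5; 0; 7];
  [:: 6; 4; 2; 5; 0; 7; 1; 8; 3];
  [:: 6; 5; 1; 2; 7; 3; 4; 0; 8];
  [:: 6; 5; 1; 4; 0; 8; 2; 7; 3];
  [:: 7; 0; 5; 2; 4; 6; 3; 8; 1];
  [:: 7; 0; 5; 3; 8; 1; 2; 4; 6];
  [:: 7; 2; 3; 0; 4; 8; 5; 6; 1];
  [:: 7; 2; 3; 5; 6; 1; 0; 4; 8];
  [:: 7; 3; 2; 0; 8; 4; 5; 1; 6];
  [:: 7; 3; 2; 5; 1; 6; 0; 8; 4];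
  [:: 7; 5; 0; 2; 6; 4; 3; 1; 8];
  [:: 7; 5; 0; 3; 1; 8; 2; 6; 4];
  [:: 8; 0; 4; 1; 5; 6; 3; 7; 2];
  [:: 8; 0; 4; 3; 7; 2; 1; 5; 6];
  [:: 8; 1; 3; 0; 5; 7; 4; 6; 2];
  [:: 8; 1; 3; 4; 6; 2; 0; 5; 7];
  [:: 8; 3; 1; 0; 7; 5; 4; 2; 6];
  [:: 8; 3; 1; 4; 2; 6; 0; 7; 5];
  [:: 8; 4; 0; 1; 6; 5; 3; 2; 7];
  [:: 8; 4; 0; 3; 2; 7; 1; 6; 5]].
Definition trT_tab : seq nat := [:: 2; 4; 0; 6; 1; 7; 3; 5; 10; 12; 8; 14; 9; 15; 11; 13; 18; 20; 16; 22; 17; 23; 19; 21; 26; 28; 24; 30; 25; 31; 27; 29; 34; 36; 32; 38; 33; 39; 35; 37; 42; 44; 40; 46; 41; 47; 43; 45; 50; 52; 48; 54; 49; 55; 51; 53; 58; 60; 56; 62; 57; 63; 59; 61; 66; 68; 64; 70; 65; 71; 67; 69].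
Definition rs0_tab : seq nat := [:: 44; 58; 36; 66; 34; 68; 42; 60; 46; 50; 28; 64; 26; 70; 40; 52; 38; 48; 30; 56; 24; 62; 32; 54; 20; 63; 12; 71; 10; 65; 18; 57; 22; 55; 4; 69; 2; 67; 16; 49; 14; 53; 6; 61; 0; 59; 8; 51; 17; 39; 9; 47; 15; 41; 23; 33; 19; 31; 1; 45; 7; 43; 21; 25; 11; 29; 3; 37; 5; 35; 13; 27].
Definition rs1_tab : seq nat := [:: 1; 0; 3; 2; 5; 4; 7; 6; 9; 8; 11; 10; 13; 12; 15; 14; 17; 16; 19; 18; 21; 20; 23; 22; 25; 24; 27; 26; 29; 28; 31; 30; 33; 32; 35; 34; 37; 36; 39; 38; 41; 40; 43; 42; 45; 44; 47; 46; 49; 48; 51; 50; 53; 52; 55; 54; 57; 56; 59; 58; 61; 60; 63; 62; 65; 64; 67; 66; 69; 68; 71; 70].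
Definition cs0_tab : seq nat := [:: 33; 32; 41; 40; 56; 57; 64; 65; 25; 24; 43; 42; 48; 49; 66; 67; 27; 26; 35; 34; 50; 51; 58; 59; 9; 8; 17; 16; 61; 60; 69; 68; 1; 0; 19; 18; 53; 52; 71; 70; 3; 2; 11; 10; 55; 54; 63; 62; 12; 13; 20; 21; 37; 36; 45; 44; 4; 5; 22; 23; 29; 28; 47; 46; 6; 7; 14; 15; 31; 30; 39; 38].
Definition cs1_tab : seq nat := [:: 6; 7; 4; 5; 2; 3; 0; 1; 14; 15; 12; 13; 10; 11; 8; 9; 22; 23; 20; 21; 18; 19; 16; 17; 30; 31; 28; 29; 26; 27; 24; 25; 38; 39; 36; 37; 34; 35; 32; 33; 46; 47; 44; 45; 42; 43; 40; 41; 54; 55; 52; 53; 50; 51; 48; 49; 62; 63; 60; 61; 58; 59; 56; 57; 70; 71; 68; 69; 66; 67; 64; 65].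
Definition sols16 : seq (seq nat) := [:: [:: 0; 58; 45; 64; 10; 16; 39; 16; 10];
  [:: 0; 58; 45; 64; 10; 16; 39; 48; 29];
  [:: 0; 58; 45; 64; 10; 29; 39; 16; 48];
  [:: 0; 58; 45; 64; 10; 29; 39; 48; 16];
  [:: 0; 58; 45; 64; 16; 10; 39; 10; 16];
  [:: 0; 58; 45; 64; 16; 10; 39; 29; 48];
  [:: 0; 58; 45; 64; 16; 48; 39; 10; 29];
  [:: 0; 58; 45; 64; 16; 48; 39; 29; 10];
  [:: 0; 58; 45; 64; 29; 10; 39; 16; 48];
  [:: 0; 58; 45; 64; 29; 10; 39; 48; 16];
  [:: 0; 58; 45; 64; 29; 48; 39; 16; 10];
  [:: 0; 58; 45; 64; 29; 48; 39; 48; 29];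
  [:: 0; 58; 45; 64; 48; 16; 39; 10; 29];
  [:: 0; 58; 45; 64; 48; 16; 39; 29; 10];
  [:: 0; 58; 45; 64; 48; 29; 39; 10; 16];
  [:: 0; 58; 45; 64; 48; 29; 39; 29; 48]].

Definition sqv (k i j : nat) : nat := nth 0 (nth [::] sqs k) (3*i+j).
Definition allI (n : nat) (P : nat -> bool) : bool := all P (iota 0 n).
Lemma allIP n P : allI n P -> forall k, k < n -> P k.
Proof. by move=> /allP H k Hk; apply: H; rewrite mem_iota. Qed.

Definition tab (t : seq nat) (k : nat) : 'I_72 := inord (nth 0 t k).
Definition sw (s : bool) (i : nat) : nat :=
  if s then (if i == 1 then 2 else if i == 2 then 1 else i)
  else (if i == 0 then 1 else if i == 1 then 0 else i).
Definition sw12 (a : nat) : nat := if a == 1 then 2 else if a == 2 then 1 else a.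
Definition rowc (k l : nat) : bool :=
  allI 3 (fun i => allI 3 (fun j => allI 3 (fun j' => sqv k i j != sqv l i j'))).
Definition colc (k l : nat) : bool :=
  allI 3 (fun j => allI 3 (fun i => allI 3 (fun i' => sqv k i j != sqv l i' j))).

Definition Rel (B : board) (K : nat -> nat -> 'I_72) : Prop :=
  forall a b i j, a < 3 -> b < 3 -> i < 3 -> j < 3 ->
    nat_of_ord (B (inord (3*a+i), inord (3*b+j))) = sqv (K a b) i j.
Definition compat (K : nat -> nat -> 'I_72) : Prop :=
  (forall a b b', a < 3 -> b < 3 -> b' < 3 -> b != b' -> rowc (K a b) (K a b')) /\
  (forall b a a', b < 3 -> a < 3 -> a' < 3 -> a != a' -> colc (K a b) (K a' b)).

Lemma ord9_dec (x : 'I_9) : x = inord (3 * (x %/ 3) + x %% 3).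
Proof. by apply/val_inj; rewrite /= inordK -?divn_eq ?ltn_ord // mulnC -divn_eq. Qed.
Lemma div3_lt (x : 'I_9) : x %/ 3 < 3.
Proof. by rewrite ltn_divLR. Qed.
Lemma mod3_lt (x : nat) : x %% 3 < 3.
Proof. by rewrite ltn_mod. Qed.
Lemma cell_dec (x : cell) :
  x = (inord (3 * (x.1 %/ 3) + x.1 %% 3), inord (3 * (x.2 %/ 3) + x.2 %% 3)).
Proof. by case: x => r c /=; rewrite -!ord9_dec. Qed.

Lemma inord_inj9 (m n : nat) : m < 9 -> n < 9 -> (inord m : 'I_9) = inord n -> m = n.
Proof. by move=> Hm Hn /(congr1 val); rewrite /= !inordK. Qed.

Definition pairs : seq (nat * nat) :=
  [:: (0,0); (0,1); (0,2); (1,0); (1,1); (1,2); (2,0); (2,1); (2,2)].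
Definition vB (B : board) (r c : nat) : nat := B (inord r, inord c).
Definition blk (B : board) (a b : nat) : seq nat :=
  [seq vB B (3*a + p.1) (3*b + p.2) | p <- pairs].
Definition Kof (B : board) (a b : nat) : 'I_72 := inord (index (blk B a b) sqs).

Definition mk (x0 x1 x3 x4 : nat) : seq nat :=
  let x2 := 12 - (x0 + x1) in let x5 := 12 - (x3 + x4) in
  let x6 := 12 - (x0 + x3) in let x7 := 12 - (x1 + x4) in
  let x8 := 12 - (x2 + x5) in [:: x0; x1; x2; x3; x4; x5; x6; x7; x8].
Definition sums_ok (l : seq nat) : bool :=
  match l with
  | [:: x0; x1; x2; x3; x4; x5; x6; x7; x8] =>
     [&& x0+x1+x2 == 12, x3+x4+x5 == 12, x6+x7+x8 == 12,
         x0+x3+x6 == 12, x1+x4+x7 == 12 & x2+x5+x8 == 12]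
  | _ => false end.
Lemma blk_check : allI 9 (fun x0 => allI 9 (fun x1 => allI 9 (fun x3 => allI 9 (fun x4 =>
  let l := mk x0 x1 x3 x4 in (uniq l && sums_ok l) ==> (l \in sqs))))).
Proof. by vm_compute. Qed.

Lemma card1_eq (T : finType) (A : {set T}) x y : #|A| == 1 -> x \in A -> y \in A -> x = y.
Proof. by move=> /cards1P [z ->]; rewrite !inE => /eqP -> /eqP ->. Qed.

Section SM.
Variable B : board.
Hypothesis HB : semimagic B.

Lemma sm_row (r c1 c2 : 'I_9) : B (r, c1) = B (r, c2) -> c1 = c2.
Proof.
move: HB => /and3P [/and3P [/forallP Hr _ _] _ _] E.
move: (Hr r) => /forallP /(_ (B (r, c1))) H.
by apply: (card1_eq H); rewrite inE ?E.
Qed.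

Lemma sm_col (c r1 r2 : 'I_9) : B (r1, c) = B (r2, c) -> r1 = r2.
Proof.
move: HB => /and3P [/and3P [_ /forallP Hc _] _ _] E.
move: (Hc c) => /forallP /(_ (B (r1, c))) H.
by apply: (card1_eq H); rewrite inE ?E.
Qed.

Lemma sm_blk (a b : 'I_3) (p q : 'I_3 * 'I_3) :
  B (bcell a b p.1 p.2) = B (bcell a b q.1 q.2) -> p = q.
Proof.
move: HB => /and3P [/and3P [_ _ /forallP Hb] _ _] E.
move: (Hb a) => /forallP /(_ b) /forallP /(_ (B (bcell a b p.1 p.2))) H.
by apply: (card1_eq H); rewrite inE ?E.
Qed.

Lemma sm_rsum a b i : a < 3 -> b < 3 -> i < 3 ->
  vB B (3*a+i) (3*b) + vB B (3*a+i) (3*b+1) + vB B (3*a+i) (3*b+2) = 12.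
Proof.
move=> Ha Hb Hi.
move: HB => /and3P [_ /forallP /(_ (Ordinal Ha)) /forallP /(_ (Ordinal Hb))
   /forallP /(_ (Ordinal Hi)) /eqP H _].
by rewrite -H !big_ord_recr big_ord0 /= add0n /vB /bcell /= addn0.
Qed.

Lemma sm_csum a b j : a < 3 -> b < 3 -> j < 3 ->
  vB B (3*a) (3*b+j) + vB B (3*a+1) (3*b+j) + vB B (3*a+2) (3*b+j) = 12.
Proof.
move=> Ha Hb Hj.
move: HB => /and3P [_ _ /forallP /(_ (Ordinal Ha)) /forallP /(_ (Ordinal Hb))
   /forallP /(_ (Ordinal Hj)) /eqP H].
by rewrite -H !big_ord_recr big_ord0 /= add0n /vB /bcell /= addn0.
Qed.

Lemma pairs_lt : all (fun p : nat * nat => (p.1 < 3) && (p.2 < 3)) pairs.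
Proof. by []. Qed.

Lemma blk_uniq a b : a < 3 -> b < 3 -> uniq (blk B a b).
Proof.
move=> Ha Hb; rewrite /blk map_inj_in_uniq //.
move=> [p1 p2] [q1 q2] /(allP pairs_lt) /andP [Hp1 Hp2] /(allP pairs_lt) /andP [Hq1 Hq2].
rewrite /vB /= => /val_inj E.
have := @sm_blk (Ordinal Ha) (Ordinal Hb) (Ordinal Hp1, Ordinal Hp2) (Ordinal Hq1, Ordinal Hq2) E.
by case=> -> ->.
Qed.

Lemma blk_in a b : a < 3 -> b < 3 -> blk B a b \in sqs.
Proof.
move=> Ha Hb.
have U := blk_uniq Ha Hb.
have R0 := sm_rsum Ha Hb (isT : 0 < 3).
have R1 := sm_rsum Ha Hb (isT : 1 < 3).
have R2 := sm_rsum Ha Hb (isT : 2 < 3).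
have C0 := sm_csum Ha Hb (isT : 0 < 3).
have C1 := sm_csum Ha Hb (isT : 1 < 3).
have C2 := sm_csum Ha Hb (isT : 2 < 3).
rewrite !addn0 in R0 C0.
have E : blk B a b = mk (vB B (3*a) (3*b)) (vB B (3*a) (3*b+1)) (vB B (3*a+1) (3*b)) (vB B (3*a+1) (3*b+1)).
  rewrite /blk /mk /= !addn0; congr [:: _; _; _; _; _; _; _; _; _]; lia.
have L := fun x => @ltn_ord 9 (B x).
move: (blk_check) => /allIP /(_ _ (L (inord (3*a), inord (3*b)))) /allIP
  /(_ _ (L (inord (3*a), inord (3*b+1)))) /allIP
  /(_ _ (L (inord (3*a+1), inord (3*b)))) /allIP
  /(_ _ (L (inord (3*a+1), inord (3*b+1)))).
rewrite -/(vB B (3*a) (3*b)) -/(vB B (3*a) (3*b+1)) -/(vB B (3*a+1) (3*b)) -/(vB B (3*a+1) (3*b+1)).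
cbv zeta; rewrite -E U /= => /implyP; apply.
by rewrite !addn0; repeat (apply/andP; split); apply/eqP; lia.
Qed.
End SM.

Lemma allIP' n (P : nat -> bool) : (forall k, k < n -> P k) -> allI n P.
Proof. by move=> H; apply/allP => k; rewrite mem_iota => /andP [_ Hk]; apply: H. Qed.

Lemma nth_pairs i j : i < 3 -> j < 3 -> nth (0,0) pairs (3*i+j) = (i,j).
Proof. by case: i => [|[|[|i]]] //; case: j => [|[|[|j]]]. Qed.

Lemma size_sqs : size sqs = 72. Proof. by []. Qed.

Lemma Rel_Kof B : semimagic B -> Rel B (Kof B).
Proof.
move=> HB a b i j Ha Hb Hi Hj.
have Hin := blk_in HB Ha Hb.
rewrite /sqv /Kof inordK; last by rewrite -size_sqs index_mem.
rewrite (nth_index _ Hin) /blk (nth_map (0,0)); last by have ->: size pairs = 9 by []; lia.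
by rewrite nth_pairs.
Qed.

Lemma compat_Rel B K : semimagic B -> Rel B K -> compat K.
Proof.
move=> HB R; split.
- move=> a b b' Ha Hb Hb' Hbb; rewrite /rowc.
  refine (allIP' _) => i Hi; refine (allIP' _) => j Hj; refine (allIP' _) => j' Hj'.
  rewrite -(R a b i j) // -(R a b' i j') //; apply/negP => /eqP /val_inj /(sm_row HB) E.
  have {}E : 3*b+j = 3*b'+j' by apply: inord_inj9 E; lia.
  by move/eqP: Hbb; lia.
- move=> b a a' Hb Ha Ha' Haa; rewrite /colc.
  refine (allIP' _) => j Hj; refine (allIP' _) => i Hi; refine (allIP' _) => i' Hi'.
  rewrite -(R a b i j) // -(R a' b i' j) //; apply/negP => /eqP /val_inj /(sm_col HB) E.
  have {}E : 3*a+i = 3*a'+i' by apply: inord_inj9 E; lia.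
  by move/eqP: Haa; lia.
Qed.

Inductive code := cT | cR of 'I_3 & bool | cC of 'I_3 & bool | cBS | cPS.
Definition r1 (s : bool) := if s then 1 else 0.
Definition r2 (s : bool) := if s then 2 else 1.
Definition tp (a : nat) (s : bool) : {perm 'I_9} := tperm (inord (3*a + r1 s)) (inord (3*a + r2 s)).
Definition gen (c : code) : {perm cell} :=
  match c with
  | cT => transp | cR a s => rowact (tp a s) | cC b s => colact (tp b s)
  | cBS => rowact swap23 | cPS => colact swap23 end.
Definition rtab (s : bool) := if s then rs1_tab else rs0_tab.
Definition ctab (s : bool) := if s then cs1_tab else cs0_tab.
Definition kact (c : code) (K : nat -> nat -> 'I_72) : nat -> nat -> 'I_72 :=
  match c with
  | cT => fun a b => tab trT_tab (K b a)
  | cR a0 s => fun a b => if a == a0 then tab (rtab s) (K a b) else K a b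
  | cC b0 s => fun a b => if b == b0 then tab (ctab s) (K a b) else K a b
  | cBS => fun a b => K (sw12 a) b
  | cPS => fun a b => K a (sw12 b) end.

Lemma tabs_lt : all (fun t => all (fun x => x < 72) t) [:: trT_tab; rs0_tab; rs1_tab; cs0_tab; cs1_tab].
Proof. by vm_compute. Qed.
Lemma tabE t k : all (fun x => x < 72) t -> nat_of_ord (tab t k) = nth 0 t k.
Proof.
move=> /allP H; rewrite /tab inordK //.
case: (ltnP k (size t)) => Hk; first by apply: H; rewrite mem_nth.
by rewrite nth_default.
Qed.
Lemma trE k : nat_of_ord (tab trT_tab k) = nth 0 trT_tab k.
Proof. by rewrite tabE //; case/and5P: tabs_lt. Qed.
Lemma rtE s k : nat_of_ord (tab (rtab s) k) = nth 0 (rtab s) k.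
Proof. by rewrite tabE //; case/and5P: tabs_lt => _ ? ? _ _; case: s. Qed.
Lemma ctE s k : nat_of_ord (tab (ctab s) k) = nth 0 (ctab s) k.
Proof. by rewrite tabE //; case/and5P: tabs_lt => _ _ _ ? ?; case: s. Qed.

Lemma chk_tr : allI 72 (fun k => allI 3 (fun i => allI 3 (fun j =>
  sqv (nth 0 trT_tab k) i j == sqv k j i))).
Proof. by vm_compute. Qed.
Lemma chk_rt : all (fun s => allI 72 (fun k => allI 3 (fun i => allI 3 (fun j =>
  sqv (nth 0 (rtab s) k) i j == sqv k (sw s i) j)))) [:: false; true].
Proof. by vm_compute. Qed.
Lemma chk_ct : all (fun s => allI 72 (fun k => allI 3 (fun i => allI 3 (fun j =>
  sqv (nth 0 (ctab s) k) i j == sqv k i (sw s j))))) [:: false; true].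
Proof. by vm_compute. Qed.

Lemma sqv_tr (k : 'I_72) i j : i < 3 -> j < 3 -> sqv (tab trT_tab k) i j = sqv k j i.
Proof.
by move=> Hi Hj; rewrite trE; apply/eqP; move: chk_tr => /allIP /(_ _ (ltn_ord k)) /allIP /(_ _ Hi) /allIP /(_ _ Hj).
Qed.
Lemma sqv_rt s (k : 'I_72) i j : i < 3 -> j < 3 -> sqv (tab (rtab s) k) i j = sqv k (sw s i) j.
Proof.
move=> Hi Hj; rewrite rtE; apply/eqP; move: chk_rt => /allP /(_ s).
by rewrite inE; case: s => /(_ isT) /allIP /(_ _ (ltn_ord k)) /allIP /(_ _ Hi) /allIP /(_ _ Hj).
Qed.
Lemma sqv_ct s (k : 'I_72) i j : i < 3 -> j < 3 -> sqv (tab (ctab s) k) i j = sqv k i (sw s j).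
Proof.
move=> Hi Hj; rewrite ctE; apply/eqP; move: chk_ct => /allP /(_ s).
by rewrite inE; case: s => /(_ isT) /allIP /(_ _ (ltn_ord k)) /allIP /(_ _ Hi) /allIP /(_ _ Hj).
Qed.

Lemma val_tperm (x y z : 'I_9) :
  nat_of_ord (tperm x y z) = if nat_of_ord z == nat_of_ord x then nat_of_ord y else if nat_of_ord z == nat_of_ord y then nat_of_ord x else nat_of_ord z.
Proof.
case: tpermP => [->|->|/eqP Hx /eqP Hy]; rewrite ?eqxx //.
  by case: ifP => // /eqP /val_inj ->.
by rewrite !val_eqE (negbTE Hx) (negbTE Hy).
Qed.
Arguments val_tperm : clear implicits.

Lemma sw_lt s i : i < 3 -> sw s i < 3.
Proof. by case: s; case: i => [|[|[|]]]. Qed.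
Lemma sw12_lt a : a < 3 -> sw12 a < 3.
Proof. by case: a => [|[|[|]]]. Qed.

Lemma tpE (a0 : 'I_3) s a i : a < 3 -> i < 3 ->
  tp a0 s (inord (3*a+i)) = inord (3*a + (if a == a0 then sw s i else i)).
Proof.
move=> Ha Hi.
have H0 : 3*a+i < 9 by lia.
have H1 : 3*a0 + r1 s < 9 by rewrite /r1; have := ltn_ord a0; case: (s); lia.
have H2 : 3*a0 + r2 s < 9 by rewrite /r2; have := ltn_ord a0; case: (s); lia.
have H3 : 3*a + (if a == a0 then sw s i else i) < 9.
  by case: ifP => _; [have := sw_lt s Hi|]; lia.
apply/val_inj; rewrite /tp /= val_tperm (inordK H0) (inordK H1) (inordK H2) (inordK H3).
clear H0 H1 H2 H3.
case: a0 => a0 Ha0 /=.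
by case: s; case: a Ha => [|[|[|]]] //; case: i Hi => [|[|[|]]] //; case: a0 Ha0 => [|[|[|]]].
Qed.

Lemma swap23E a i : a < 3 -> i < 3 -> swap23 (inord (3*a+i)) = inord (3*(sw12 a) + i).
Proof.
move=> Ha Hi.
have H0 : 3*a+i < 9 by lia.
have H1 : 3*(sw12 a)+i < 9 by have := sw12_lt Ha; lia.
apply/val_inj; rewrite /swap23 /= !permM !val_tperm (inordK H0) (inordK H1) !inordK //.
clear H0 H1.
by case: a Ha => [|[|[|]]] //; case: i Hi => [|[|[|]]].
Qed.

Lemma invol_inv (T : finType) (s : {perm T}) : (forall x, s (s x) = x) -> forall x, (s^-1)%g x = s x.
Proof. by move=> H x; rewrite -{1}(H x) permK. Qed.

Lemma swap23K x : swap23 (swap23 x) = x.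
Proof.
rewrite (ord9_dec x); set a := x %/ 3; set i := x %% 3.
have Ha : a < 3 by apply: div3_lt. have Hi : i < 3 by apply: mod3_lt.
rewrite !swap23E ?sw12_lt //; congr (inord (3 * _ + _)).
by case: (a) Ha => [|[|[|]]].
Qed.

Lemma gen_invol c x : gen c (gen c x) = x.
Proof.
case: c => [|a s|b s||] /=; rewrite ?permE.
- by case: x.
- by rewrite /rowf /= tpermK; case: x.
- by rewrite /colf /= tpermK; case: x.
- by rewrite /rowf /= swap23K; case: x.
- by rewrite /colf /= swap23K; case: x.
Qed.

Lemma bactE g B x : bact g B x = B ((g^-1)%g x).
Proof. by rewrite ffunE. Qed.
Lemma bact_gen c B x : bact (gen c) B x = B (gen c x).
Proof. by rewrite bactE invol_inv // => y; apply: gen_invol. Qed.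
Lemma bactM g h B : bact (g * h) B = bact h (bact g B).
Proof. by apply/ffunP => x; rewrite !ffunE invMg permM. Qed.
Lemma bact1 B : bact 1 B = B.
Proof. by apply/ffunP => x; rewrite !ffunE invg1 perm1. Qed.

Lemma Rel_step c B K : Rel B K -> Rel (bact (gen c) B) (kact c K).
Proof.
move=> R a b i j Ha Hb Hi Hj; rewrite bact_gen.
case: c => [|a0 s|b0 s||] /=; rewrite ?permE /rowf /colf /=.
- by rewrite R // sqv_tr.
- rewrite tpE // R //; last by case: ifP => _ //; apply: sw_lt.
  by case: ifP => _ //; rewrite sqv_rt.
- rewrite tpE // R //; last by case: ifP => _ //; apply: sw_lt.
  by case: ifP => _ //; rewrite sqv_ct.
- by rewrite swap23E // R // sw12_lt.
- by rewrite swap23E // R // sw12_lt.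
Qed.

Lemma chk_trc : allI 72 (fun k => allI 72 (fun l =>
  (rowc (nth 0 trT_tab k) (nth 0 trT_tab l) == colc k l) &&
  (colc (nth 0 trT_tab k) (nth 0 trT_tab l) == rowc k l))).
Proof. by vm_compute. Qed.
Lemma chk_rtc : all (fun s => allI 72 (fun k => allI 72 (fun l =>
  [&& rowc (nth 0 (rtab s) k) (nth 0 (rtab s) l) == rowc k l,
      colc (nth 0 (rtab s) k) l == colc k l &
      colc k (nth 0 (rtab s) l) == colc k l]))) [:: false; true].
Proof. by vm_compute. Qed.
Lemma chk_ctc : all (fun s => allI 72 (fun k => allI 72 (fun l =>
  [&& colc (nth 0 (ctab s) k) (nth 0 (ctab s) l) == colc k l,
      rowc (nth 0 (ctab s) k) l == rowc k l &
      rowc k (nth 0 (ctab s) l) == rowc k l]))) [:: false; true].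
Proof. by vm_compute. Qed.

Section TabLemmas.
Variables (k l : 'I_72) (s : bool).
Let Htr := allIP (allIP chk_trc (ltn_ord k)) (ltn_ord l).
Lemma L_tr_r : rowc (tab trT_tab k) (tab trT_tab l) = colc k l.
Proof. by rewrite !trE; case/andP: Htr => /eqP. Qed.
Lemma L_tr_c : colc (tab trT_tab k) (tab trT_tab l) = rowc k l.
Proof. by rewrite !trE; case/andP: Htr => _ /eqP. Qed.
Let Hrt : [&& rowc (nth 0 (rtab s) k) (nth 0 (rtab s) l) == rowc k l,
      colc (nth 0 (rtab s) k) l == colc k l &
      colc k (nth 0 (rtab s) l) == colc k l].
Proof.
move: chk_rtc => /allP /(_ s); rewrite inE; case: (s) => /(_ isT) H;
  exact: (allIP (allIP H (ltn_ord k)) (ltn_ord l)).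
Qed.
Lemma L_rt_r : rowc (tab (rtab s) k) (tab (rtab s) l) = rowc k l.
Proof. by rewrite !rtE; case/and3P: Hrt => /eqP. Qed.
Lemma L_rt_c1 (m : nat) : m = l -> colc (tab (rtab s) k) m = colc k m.
Proof. by move=> ->; rewrite !rtE; case/and3P: Hrt => _ /eqP. Qed.
Lemma L_rt_c2 (m : nat) : m = k -> colc m (tab (rtab s) l) = colc m l.
Proof. by move=> ->; rewrite !rtE; case/and3P: Hrt => _ _ /eqP. Qed.
Let Hct : [&& colc (nth 0 (ctab s) k) (nth 0 (ctab s) l) == colc k l,
      rowc (nth 0 (ctab s) k) l == rowc k l &
      rowc k (nth 0 (ctab s) l) == rowc k l].
Proof.
move: chk_ctc => /allP /(_ s); rewrite inE; case: (s) => /(_ isT) H;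
  exact: (allIP (allIP H (ltn_ord k)) (ltn_ord l)).
Qed.
Lemma L_ct_c : colc (tab (ctab s) k) (tab (ctab s) l) = colc k l.
Proof. by rewrite !ctE; case/and3P: Hct => /eqP. Qed.
Lemma L_ct_r1 (m : nat) : m = l -> rowc (tab (ctab s) k) m = rowc k m.
Proof. by move=> ->; rewrite !ctE; case/and3P: Hct => _ /eqP. Qed.
Lemma L_ct_r2 (m : nat) : m = k -> rowc m (tab (ctab s) l) = rowc m l.
Proof. by move=> ->; rewrite !ctE; case/and3P: Hct => _ _ /eqP. Qed.
End TabLemmas.

Lemma sw12_neq a a' : a < 3 -> a' < 3 -> a != a' -> sw12 a != sw12 a'.
Proof. by case: a => [|[|[|]]] //; case: a' => [|[|[|]]]. Qed.

Lemma compat_step c K : compat K -> compat (kact c K).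
Proof.
move=> [Hr Hc]; case: c => [|a0 s|b0 s||]; split => /=.
- by move=> a b b' Ha Hb Hb' Hbb; rewrite L_tr_r; apply: Hc.
- by move=> b a a' Hb Ha Ha' Haa; rewrite L_tr_c; apply: Hr.
- move=> a b b' Ha Hb Hb' Hbb; case: ifP => _; rewrite ?L_rt_r; exact: Hr.
- move=> b a a' Hb Ha Ha' Haa; case: ifP => _; case: ifP => _.
  + rewrite (L_rt_c1 _ _ (erefl (nat_of_ord (tab (rtab s) (K a' b))))).
    by rewrite (L_rt_c2 _ _ (erefl (nat_of_ord (K a b)))); apply: Hc.
  + by rewrite (L_rt_c1 _ _ (erefl (nat_of_ord (K a' b)))); apply: Hc.
  + by rewrite (L_rt_c2 _ _ (erefl (nat_of_ord (K a b)))); apply: Hc.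
  + exact: Hc.
- move=> a b b' Ha Hb Hb' Hbb; case: ifP => _; case: ifP => _.
  + rewrite (L_ct_r1 _ _ (erefl (nat_of_ord (tab (ctab s) (K a b'))))).
    by rewrite (L_ct_r2 _ _ (erefl (nat_of_ord (K a b)))); apply: Hr.
  + by rewrite (L_ct_r1 _ _ (erefl (nat_of_ord (K a b')))); apply: Hr.
  + by rewrite (L_ct_r2 _ _ (erefl (nat_of_ord (K a b)))); apply: Hr.
  + exact: Hr.
- move=> b a a' Hb Ha Ha' Haa; case: ifP => _; rewrite ?L_ct_c; exact: Hc.
- by move=> a b b' Ha Hb Hb' Hbb; apply: Hr => //; apply: sw12_lt.
- by move=> b a a' Hb Ha Ha' Haa; apply: Hc => //; [apply: sw12_lt|apply: sw12_lt|apply: sw12_neq].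
- by move=> a b b' Ha Hb Hb' Hbb; apply: Hr => //; [apply: sw12_lt|apply: sw12_lt|apply: sw12_neq].
- by move=> b a a' Hb Ha Ha' Haa; apply: Hc => //; apply: sw12_lt.
Qed.

Definition gword (w : seq code) : {perm cell} := foldl (fun g c => g * gen c)%g 1%g w.
Definition bword (w : seq code) (B : board) : board := foldl (fun B c => bact (gen c) B) B w.
Definition kactw (w : seq code) K := foldl (fun K c => kact c K) K w.

Lemma bact_word w B : bact (gword w) B = bword w B.
Proof.
rewrite /gword /bword -{2}(bact1 B); move: 1%g B.
elim: w => [|c w IH] g B //=; by rewrite IH bactM.
Qed.
Lemma Rel_word w B K : Rel B K -> Rel (bword w B) (kactw w K).
Proof. by elim: w B K => [|c w IH] B K //= R; apply: IH; apply: Rel_step. Qed.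
Lemma compat_word w K : compat K -> compat (kactw w K).
Proof. by elim: w K => [|c w IH] K //= R; apply: IH; apply: compat_step. Qed.

Lemma gen_in c : gen c \in HGamma.
Proof.
apply: mem_gen; rewrite /HGamma_gens.
case: c => [|a s|b s||] /=.
- by apply/setUP; left; apply/setUP; left; apply/setUP; left; rewrite inE.
- apply/setUP; left; apply/setUP; left; apply/setUP; right.
  apply/imsetP; exists (inord (3*a + r1 s), inord (3*a + r2 s)) => //.
  rewrite inE /= !inordK; have := ltn_ord a; rewrite /r1 /r2; case: (s) => ? //; apply/eqP; lia.
- apply/setUP; left; apply/setUP; right.
  apply/imsetP; exists (inord (3*b + r1 s), inord (3*b + r2 s)) => //.
  rewrite inE /= !inordK; have := ltn_ord b; rewrite /r1 /r2; case: (s) => ? //; apply/eqP; lia.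
- by apply/setUP; right; rewrite !inE eqxx orbT.
- by apply/setUP; right; rewrite !inE eqxx.
Qed.
Lemma gword_in w : gword w \in HGamma.
Proof.
rewrite /gword; have : (1%g : {perm cell}) \in HGamma by apply: group1.
move: 1%g; elim: w => [|c w IH] g Hg //=; apply: IH; apply: groupM => //; apply: gen_in.
Qed.

Definition gt := (nat * nat * nat * nat * nat)%type.
Definition gnact (c : code) (t : gt) : gt :=
  let: (k00, k01, k02, k10, k20) := t in
  match c with
  | cT => let T := nth 0 trT_tab in (T k00, T k10, T k20, T k01, T k02)
  | cR a0 s => let f (a : nat) k := if a == a0 then nth 0 (rtab s) k else k in
               (f 0 k00, f 0 k01, f 0 k02, f 1 k10, f 2 k20)
  | cC b0 s => let f (b : nat) k := if b == b0 then nth 0 (ctab s) k else k in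
               (f 0 k00, f 1 k01, f 2 k02, f 0 k10, f 0 k20)
  | cBS => (k00, k01, k02, k20, k10)
  | cPS => (k00, k02, k01, k10, k20)
  end.
Definition gn (K : nat -> nat -> 'I_72) : gt :=
  (nat_of_ord (K 0 0), nat_of_ord (K 0 1), nat_of_ord (K 0 2), nat_of_ord (K 1 0), nat_of_ord (K 2 0)).
Definition gnactw (w : seq code) (t : gt) : gt := foldl (fun t c => gnact c t) t w.

Lemma gn_kact c K : gn (kact c K) = gnact c (gn K).
Proof. by case: c => [|a0 s|b0 s||]; rewrite /gn /= ?trE ?(fun_if (@nat_of_ord 72)) ?rtE ?ctE. Qed.
Lemma gn_kactw w K : gn (kactw w K) = gnactw w (gn K).
Proof. by elim: w K => [|c w IH] K //=; rewrite IH gn_kact. Qed.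

Definition g00 (t : gt) : nat := t.1.1.1.1.
Lemma g00_act c t : g00 (gnact c t) = g00 (gnact c (g00 t, 0, 0, 0, 0)).
Proof. by case: t => [[[[k00 k01] k02] k10] k20]; case: c. Qed.
Lemma g00_actw w t : g00 (gnactw w t) = g00 (gnactw w (g00 t, 0, 0, 0, 0)).
Proof.
elim: w t => [|c w IH] t; first by [].
have E : forall t', gnactw (c :: w) t' = gnactw w (gnact c t') by [].
by rewrite !E IH [in RHS]IH g00_act.
Qed.

Definition o0 : 'I_3 := @Ordinal 3 0 isT.
Definition o1 : 'I_3 := @Ordinal 3 1 isT.
Definition o2 : 'I_3 := @Ordinal 3 2 isT.
Definition rowwords (a : 'I_3) : seq (seq code) :=
  [:: [::]; [:: cR a false]; [:: cR a true]; [:: cR a false; cR a true];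
      [:: cR a true; cR a false]; [:: cR a false; cR a true; cR a false]].
Definition colwords (b : 'I_3) : seq (seq code) :=
  [:: [::]; [:: cC b false]; [:: cC b true]; [:: cC b false; cC b true];
      [:: cC b true; cC b false]; [:: cC b false; cC b true; cC b false]].
Definition W1 : seq (seq code) :=
  [seq e ++ x | e <- [:: [::]; [:: cT]], x <- [seq r ++ c | r <- rowwords o0, c <- colwords o0]].
Definition W2 : seq (seq code) :=
  [seq e ++ x | e <- [:: [::]; [:: cPS]], x <- [seq r ++ c | r <- colwords o1, c <- colwords o2]].
Definition W3 : seq (seq code) :=
  [seq e ++ x | e <- [:: [::]; [:: cBS]], x <- [seq r ++ c | r <- rowwords o1, c <- rowwords o2]].
Definition s00 := 0. Definition s01 := 58. Definition s02 := 45.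
Definition s10 := 64. Definition s20 := 39.
Definition stdT : gt := (s00, s01, s02, s10, s20).

Definition norm1 (k : nat) : seq code :=
  nth [::] W1 (find (fun w => g00 (gnactw w (k, 0, 0, 0, 0)) == s00) W1).
Definition norm2 (t : gt) : seq code :=
  nth [::] W2 (find (fun w => let t' := gnactw w t in (t'.1.1.1.2 == s01) && (t'.1.1.2 == s02)) W2).
Definition norm3 (t : gt) : seq code :=
  nth [::] W3 (find (fun w => gnactw w t == stdT) W3).
Definition norm23 (t : gt) : seq code := let w := norm2 t in w ++ norm3 (gnactw w t).

Lemma check1 : allI 72 (fun k => g00 (gnactw (norm1 k) (k, 0, 0, 0, 0)) == s00).
Proof. by vm_compute. Qed.

Lemma check23 : allI 72 (fun k01 => if rowc s00 k01 then allI 72 (fun k02 =>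
   if rowc s00 k02 then if rowc k01 k02 then allI 72 (fun k10 => if colc s00 k10 then
   allI 72 (fun k20 => if colc s00 k20 then if colc k10 k20 then
     (gnactw (norm23 (s00, k01, k02, k10, k20)) (s00, k01, k02, k10, k20) == stdT)
   else true else true) else true) else true else true) else true).
Proof. by vm_compute. Qed.

Lemma ifT_elim (b P : bool) : (if b then P else true) -> b -> P.
Proof. by case: b. Qed.

Lemma bword_cat w1 w2 B : bword (w1 ++ w2) B = bword w2 (bword w1 B).
Proof. by rewrite /bword foldl_cat. Qed.
Lemma kactw_cat w1 w2 K : kactw (w1 ++ w2) K = kactw w2 (kactw w1 K).
Proof. by rewrite /kactw foldl_cat. Qed.

Lemma stage1 (K : nat -> nat -> 'I_72) : g00 (gn (kactw (norm1 (K 0 0)) K)) = s00.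
Proof. rewrite gn_kactw g00_actw; apply/eqP; exact: (allIP check1 (ltn_ord (K 0 0))). Qed.

Lemma stage2 (K : nat -> nat -> 'I_72) : compat K -> nat_of_ord (K 0 0) = s00 -> gn (kactw (norm23 (gn K)) K) = stdT.
Proof.
move=> [Hr Hc] H00; rewrite gn_kactw; apply/eqP.
have r01 : rowc s00 (K 0 1) by rewrite -H00; apply: Hr.
have r02 : rowc s00 (K 0 2) by rewrite -H00; apply: Hr.
have r12 : rowc (K 0 1) (K 0 2) by apply: Hr.
have c10 : colc s00 (K 1 0) by rewrite -H00; apply: Hc.
have c20 : colc s00 (K 2 0) by rewrite -H00; apply: Hc.
have c12 : colc (K 1 0) (K 2 0) by apply: Hc.
move: (allIP check23 (ltn_ord (K 0 1))) => /ifT_elim /(_ r01).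
move/allIP => /(_ _ (ltn_ord (K 0 2))) /ifT_elim /(_ r02) /ifT_elim /(_ r12).
move/allIP => /(_ _ (ltn_ord (K 1 0))) /ifT_elim /(_ c10).
move/allIP => /(_ _ (ltn_ord (K 2 0))) /ifT_elim /(_ c20) /ifT_elim /(_ c12).
by rewrite /gn H00.
Qed.

Lemma normw_gen B K : Rel B K -> compat K -> exists w,
  [/\ Rel (bword w B) (kactw w K), compat (kactw w K) & gn (kactw w K) = stdT].
Proof.
move=> R C; set w1 := norm1 (K 0 0).
have G1 := stage1 K; rewrite -/w1 in G1.
set w2 := norm23 (gn (kactw w1 K)).
exists (w1 ++ w2); rewrite kactw_cat bword_cat; split.
- by apply: Rel_word; apply: Rel_word.
- by apply: compat_word; apply: compat_word.
- by apply: stage2; [apply: compat_word|].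
Qed.

Lemma card1_inj (T : finType) (f : T -> 'I_9) (s : 'I_9) :
  injective f -> #|T| = 9 -> #|[set x | f x == s]| == 1.
Proof.
move=> Hf HT; have : s \in codom f by apply: inj_card_onto => //; rewrite HT card_ord.
case/codomP => x0 ->; apply/cards1P; exists x0.
by apply/setP => x; rewrite !inE; apply/eqP/eqP => [/Hf|->].
Qed.

Lemma chk_sq_inj : allI 72 (fun k => allI 3 (fun i => allI 3 (fun j => allI 3 (fun i' => allI 3 (fun j' =>
  (sqv k i j == sqv k i' j') ==> ((i == i') && (j == j'))))))).
Proof. by vm_compute. Qed.
Lemma sqv_inj (k : 'I_72) i j i' j' : i < 3 -> j < 3 -> i' < 3 -> j' < 3 ->
  sqv k i j = sqv k i' j' -> i = i' /\ j = j'.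
Proof.
move=> Hi Hj Hi' Hj' E.
move: chk_sq_inj => /allIP /(_ _ (ltn_ord k)) /allIP /(_ _ Hi) /allIP /(_ _ Hj)
  /allIP /(_ _ Hi') /allIP /(_ _ Hj') /implyP /(_ (introT eqP E)) /andP [/eqP -> /eqP ->] //.
Qed.
Lemma chk_sq_sum : allI 72 (fun k => allI 3 (fun i =>
  (sqv k i 0 + sqv k i 1 + sqv k i 2 == 12) && (sqv k 0 i + sqv k 1 i + sqv k 2 i == 12))).
Proof. by vm_compute. Qed.

Lemma Rel_val B K (r c : 'I_9) : Rel B K ->
  nat_of_ord (B (r, c)) = sqv (K (r %/ 3) (c %/ 3)) (r %% 3) (c %% 3).
Proof. by move=> R; rewrite {1}(ord9_dec r) {1}(ord9_dec c) R ?div3_lt ?mod3_lt. Qed.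

Section SMof.
Variables (B : board) (K : nat -> nat -> 'I_72).
Hypotheses (R : Rel B K) (C : compat K).

Lemma rel_row_inj (r : 'I_9) : injective (fun c => B (r, c)).
Proof.
move=> c1 c2 /= /(congr1 val) /=; rewrite !(Rel_val _ _ R).
have Ha := div3_lt r; have Hi := mod3_lt r.
have Hb := div3_lt c1; have Hj := mod3_lt c1; have Hb' := div3_lt c2; have Hj' := mod3_lt c2.
case: (eqVneq (c1 %/ 3) (c2 %/ 3)) => [Eb|Nb].
- rewrite Eb => /sqv_inj [] // _ Ej.
  by rewrite (ord9_dec c1) (ord9_dec c2) Eb Ej.
- case: C => [Hr _]; move: (Hr _ _ _ Ha Hb Hb' Nb).
  move=> /allIP /(_ _ Hi) /allIP /(_ _ Hj) /allIP /(_ _ Hj') /eqP; done.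
Qed.

Lemma rel_col_inj (c : 'I_9) : injective (fun r => B (r, c)).
Proof.
move=> r1 r2 /= /(congr1 val) /=; rewrite !(Rel_val _ _ R).
have Hb := div3_lt c; have Hj := mod3_lt c.
have Ha := div3_lt r1; have Hi := mod3_lt r1; have Ha' := div3_lt r2; have Hi' := mod3_lt r2.
case: (eqVneq (r1 %/ 3) (r2 %/ 3)) => [Ea|Na].
- rewrite Ea => /sqv_inj [] // Ei _.
  by rewrite (ord9_dec r1) (ord9_dec r2) Ea Ei.
- case: C => [_ Hc]; move: (Hc _ _ _ Hb Ha Ha' Na).
  move=> /allIP /(_ _ Hj) /allIP /(_ _ Hi) /allIP /(_ _ Hi') /eqP; done.
Qed.

Lemma rel_blk_inj (a b : 'I_3) : injective (fun p : 'I_3 * 'I_3 => B (bcell a b p.1 p.2)).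
Proof.
move=> [p1 p2] [q1 q2] /= /(congr1 val); rewrite /bcell /= !R //.
by move=> /sqv_inj [] // E1 E2; congr pair; apply: val_inj.
Qed.

Lemma SM_of_Rel : semimagic B.
Proof.
apply/and3P; split; [apply/and3P; split| |].
- apply/forallP => r; apply/forallP => s; apply: card1_inj; [exact: rel_row_inj|exact: card_ord].
- apply/forallP => c; apply/forallP => s; apply: card1_inj; [exact: rel_col_inj|exact: card_ord].
- apply/forallP => a; apply/forallP => b; apply/forallP => s; apply: card1_inj.
    exact: rel_blk_inj.
  by rewrite card_prod card_ord.
- apply/forallP => a; apply/forallP => b; apply/forallP => i.
  rewrite !big_ord_recr big_ord0 /= add0n /bcell /= !R //.

  by case/andP: (allIP (allIP chk_sq_sum (ltn_ord (K a b))) (ltn_ord i)).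
- apply/forallP => a; apply/forallP => b; apply/forallP => j.
  rewrite !big_ord_recr big_ord0 /= add0n /bcell /= !R //.
  by case/andP: (allIP (allIP chk_sq_sum (ltn_ord (K a b))) (ltn_ord j)).
Qed.
End SMof.

Definition gnK (a b : nat) : nat :=
  if a == 0 then nth 0 [:: s00; s01; s02] b else if b == 0 then nth 0 [:: s00; s10; s20] a else 0.
Lemma gn_check : allI 9 (fun r => allI 9 (fun c => if (r < 3) || (c < 3) then
  sqv (gnK (r %/ 3) (c %/ 3)) (r %% 3) (c %% 3) == std_entry r c else true)).
Proof. by vm_compute. Qed.
Lemma lt3E (r : nat) : (r < 3) = (r %/ 3 == 0).
Proof. by rewrite -[r < 3]/(r < 1 * 3) -ltn_divLR // ltnS leqn0. Qed.

Lemma STD_of_Rel B K : Rel B K -> gn K = stdT -> std_gnomon B.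
Proof.
move=> R; rewrite /gn => -[H00 H01 H02 H10 H20].
apply/forallP => r; apply/forallP => c; apply/implyP => H.
apply/eqP; rewrite (Rel_val _ _ R).
have E : nat_of_ord (K (r %/ 3) (c %/ 3)) = gnK (r %/ 3) (c %/ 3).
  move: H; rewrite !lt3E => H; move: (div3_lt r) (div3_lt c) H.
  case: (r %/ 3) => [|[|[|]]] //; case: (c %/ 3) => [|[|[|]]] // *;
  by rewrite ?H00 ?H01 ?H02 ?H10 ?H20.
rewrite E; apply/eqP.
by move: (allIP (allIP gn_check (ltn_ord r)) (ltn_ord c)); rewrite H.
Qed.

Definition Kl (l : seq nat) (a b : nat) : 'I_72 := inord (nth 0 l (3*a+b)).
Definition bd (l : seq nat) : board :=
  [ffun x : cell => inord (sqv (Kl l (x.1 %/ 3) (x.2 %/ 3)) (x.1 %% 3) (x.2 %% 3))].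
Definition Klist (K : nat -> nat -> 'I_72) : seq nat :=
  [seq nat_of_ord (K p.1 p.2) | p <- pairs].

Lemma class_check : allI 72 (fun k11 => if rowc s10 k11 then if colc s01 k11 then
  allI 72 (fun k12 => if rowc s10 k12 then if rowc k11 k12 then if colc s02 k12 then
  allI 72 (fun k21 => if rowc s20 k21 then if colc s01 k21 then if colc k11 k21 then
  allI 72 (fun k22 => if rowc s20 k22 then if rowc k21 k22 then if colc s02 k22 then
    if colc k12 k22 then [:: s00; s01; s02; s10; k11; k12; s20; k21; k22] \in sols16
    else true else true else true else true)
  else true else true else true) else true else true else true) else true else true).
Proof. by vm_compute. Qed.

Lemma classify K : compat K -> gn K = stdT -> Klist K \in sols16.
Proof.
move=> [Hr Hc]; rewrite /gn => -[H00 H01 H02 H10 H20].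
have r11 : rowc s10 (K 1 1) by rewrite -H10; apply: Hr.
have c11 : colc s01 (K 1 1) by rewrite -H01; apply: Hc.
have r12 : rowc s10 (K 1 2) by rewrite -H10; apply: Hr.
have r1112 : rowc (K 1 1) (K 1 2) by apply: Hr.
have c12 : colc s02 (K 1 2) by rewrite -H02; apply: Hc.
have r21 : rowc s20 (K 2 1) by rewrite -H20; apply: Hr.
have c21 : colc s01 (K 2 1) by rewrite -H01; apply: Hc.
have c1121 : colc (K 1 1) (K 2 1) by apply: Hc.
have r22 : rowc s20 (K 2 2) by rewrite -H20; apply: Hr.
have r2122 : rowc (K 2 1) (K 2 2) by apply: Hr.
have c22 : colc s02 (K 2 2) by rewrite -H02; apply: Hc.
have c1222 : colc (K 1 2) (K 2 2) by apply: Hc.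
move: (allIP class_check (ltn_ord (K 1 1))) => /ifT_elim /(_ r11) /ifT_elim /(_ c11).
move/allIP => /(_ _ (ltn_ord (K 1 2))) /ifT_elim /(_ r12) /ifT_elim /(_ r1112) /ifT_elim /(_ c12).
move/allIP => /(_ _ (ltn_ord (K 2 1))) /ifT_elim /(_ r21) /ifT_elim /(_ c21) /ifT_elim /(_ c1121).
move/allIP => /(_ _ (ltn_ord (K 2 2))) /ifT_elim /(_ r22) /ifT_elim /(_ r2122) /ifT_elim /(_ c22)
  /ifT_elim /(_ c1222).
have -> : Klist K = [:: s00; s01; s02; s10; nat_of_ord (K 1 1); nat_of_ord (K 1 2); s20;
   nat_of_ord (K 2 1); nat_of_ord (K 2 2)].
  by rewrite /Klist /=; congr [:: _; _; _; _; _; _; _; _; _].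
by [].
Qed.

Lemma sols_lt : all (fun l => (size l == 9) && all (fun x => x < 72) l) sols16.
Proof. by vm_compute. Qed.

Lemma chk_sqs_lt : all (fun l => all (fun x => x < 9) l) sqs.
Proof. by vm_compute. Qed.
Lemma sqv_lt k i j : sqv k i j < 9.
Proof.
rewrite /sqv; case: (ltnP k (size sqs)) => Hk; last by rewrite (nth_default [::] Hk) nth_nil.
have /(allP chk_sqs_lt) /allP H : nth [::] sqs k \in sqs by rewrite mem_nth.
case: (ltnP (3*i+j) (size (nth [::] sqs k))) => Hn; last by rewrite (nth_default 0 Hn).
by apply: H; rewrite mem_nth.
Qed.
Lemma divmod3 a i : i < 3 -> (3*a+i) %/ 3 = a /\ (3*a+i) %% 3 = i.
Proof. move=> Hi; split; lia. Qed.

Lemma Rel_bd l : Rel (bd l) (Kl l).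
Proof.
move=> a b i j Ha Hb Hi Hj.
have E1 : nat_of_ord (inord (3*a+i) : 'I_9) = 3*a+i by rewrite inordK //; lia.
have E2 : nat_of_ord (inord (3*b+j) : 'I_9) = 3*b+j by rewrite inordK //; lia.
rewrite ffunE /= E1 E2 (inordK (sqv_lt _ _ _)).
by case: (divmod3 a Hi) => -> ->; case: (divmod3 b Hj) => -> ->.
Qed.

Definition b0p (f : 'I_9 -> 'I_9) := forall x : 'I_9, x < 3 -> f x < 3.
Definition Good (g : {perm cell}) : Prop := exists e (f h : 'I_9 -> 'I_9),
  [/\ b0p f, b0p h & forall x : cell, g x = if e then (f x.2, h x.1) else (f x.1, h x.2)].

Lemma Good1 : Good 1%g.
Proof. by exists false, id, id; split => // x; rewrite perm1; case: x. Qed.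

Lemma tperm_b0 (p : cell) : p.1 %/ 3 == p.2 %/ 3 -> b0p (tperm p.1 p.2).
Proof.
move=> /eqP E x; rewrite val_tperm !lt3E => H.
case: ifP => [/eqP Ex|_]; first by rewrite -E -Ex.
case: ifP => [/eqP Ex|_] //; by rewrite E -Ex.
Qed.
Lemma swap23_b0 : b0p swap23.
Proof.
move=> x Hx; rewrite (ord9_dec x) swap23E ?div3_lt ?mod3_lt //.
have : x %/ 3 = 0 by apply/eqP; rewrite -lt3E.
move=> ->; rewrite inordK /sw12 /=; have := mod3_lt x; lia.
Qed.
Lemma b0p_comp (t : 'I_9 -> 'I_9) f : b0p t -> b0p f -> b0p (fun x => t (f x)).
Proof. by move=> Ht Hf x Hx; apply: Ht; apply: Hf. Qed.

Lemma Good_mul g s : Good g -> s \in HGamma_gens -> Good (g * s)%g.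
Proof.
move=> [e [f [h [Hf Hh Hg]]]].
have Row : forall t : {perm 'I_9}, b0p t -> Good (g * rowact t)%g.
  move=> t Ht; exists e, (fun x => t (f x)), h; split => //; first exact: b0p_comp.
  by move=> x; rewrite permM Hg permE /rowf; case: (e).
have Col : forall t : {perm 'I_9}, b0p t -> Good (g * colact t)%g.
  move=> t Ht; exists e, f, (fun x => t (h x)); split => //; first exact: b0p_comp.
  by move=> x; rewrite permM Hg permE /colf; case: (e).
rewrite /HGamma_gens; case/setUP => [/setUP [/setUP [|]|]|].
- rewrite inE => /eqP ->; exists (~~ e), h, f; split => // x.
  by rewrite permM Hg permE /transp_fun; case: (e).
- case/imsetP => p; rewrite inE => Hp ->; apply: Row; exact: tperm_b0.
- case/imsetP => p; rewrite inE => Hp ->; apply: Col; exact: tperm_b0.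
- rewrite !inE => /orP [] /eqP ->; [apply: Col|apply: Row]; exact: swap23_b0.
Qed.

Lemma Good_HGamma g : g \in HGamma -> Good g.
Proof.
move/gen_prodgP => [n [c Hc ->]].
elim: n c Hc => [|n IH] c Hc; first by rewrite big_ord0; apply: Good1.
rewrite big_ord_recr /=; apply: Good_mul; last exact: Hc.
by apply: IH => i; apply: Hc.
Qed.

Lemma std_val C (r c : 'I_9) : std_gnomon C -> (r < 3) || (c < 3) ->
  nat_of_ord (C (r, c)) = std_entry r c.
Proof. by move=> /forallP /(_ r) /forallP /(_ c) /implyP H /H /eqP. Qed.

Lemma chk_b00 : allI 3 (fun r => allI 3 (fun c => allI 3 (fun r' => allI 3 (fun c' =>
  (std_entry r c == std_entry r' c') ==> ((r == r') && (c == c')))))).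
Proof. by vm_compute. Qed.
Lemma chk_col0 : allI 9 (fun r => allI 9 (fun r' => (std_entry r 0 == std_entry r' 0) ==> (r == r'))).
Proof. by vm_compute. Qed.
Lemma chk_row0 : allI 9 (fun c => allI 9 (fun c' => (std_entry 0 c == std_entry 0 c') ==> (c == c'))).
Proof. by vm_compute. Qed.
Lemma chk_tr0 : allI 3 (fun y => allI 3 (fun x0 => allI 3 (fun x1 => allI 3 (fun x2 =>
  ~~ [&& std_entry 0 0 == std_entry x0 y, std_entry 0 1 == std_entry x1 y &
         std_entry 0 2 == std_entry x2 y])))).
Proof. by vm_compute. Qed.

Definition z9 (k : nat) : 'I_9 := inord k.
Lemma z9E k : k < 9 -> nat_of_ord (z9 k) = k.
Proof. by move=> Hk; rewrite /z9 inordK. Qed.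

Lemma std_unique C1 C2 g : g \in HGamma -> std_gnomon C1 -> std_gnomon C2 ->
  C2 = bact g C1 -> C1 = C2.
Proof.
move=> Hg S1 S2 E.
have [e [f [h [Hf Hh Hgi]]]] := Good_HGamma (groupVr Hg).
have V : forall x, C2 x = C1 (if e then (f x.2, h x.1) else (f x.1, h x.2)).
  by move=> x; rewrite E bactE Hgi.
clear Hgi; case: e V => V.
- (* transposed case: impossible *)
  have H0 : nat_of_ord (z9 0) < 3 by rewrite z9E.
  have Hx : forall c : 'I_9, c < 3 -> std_entry 0 c = std_entry (f c) (h (z9 0)).
    move=> c Hc; have T : nat_of_ord (C2 (z9 0, c)) = std_entry (z9 0) c by rewrite (std_val S2) ?H0.
    rewrite z9E // in T; rewrite -T V /=.
    by rewrite (std_val S1) // Hf.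
  have L0 : nat_of_ord (z9 0) = 0 by rewrite z9E.
  have L1 : nat_of_ord (z9 1) = 1 by rewrite z9E.
  have L2 : nat_of_ord (z9 2) = 2 by rewrite z9E.
  have := Hx (z9 0) H0; rewrite L0 => E0.
  have := Hx (z9 1); rewrite L1 => /(_ isT) E1.
  have := Hx (z9 2); rewrite L2 => /(_ isT) E2.
  have H1 : nat_of_ord (z9 1) < 3 by rewrite L1.
  have H2 : nat_of_ord (z9 2) < 3 by rewrite L2.
  move: (allIP chk_tr0 (Hh _ H0)) => /allIP /(_ _ (Hf _ H0))
    /allIP /(_ _ (Hf _ H1)) /allIP /(_ _ (Hf _ H2)).
  by rewrite E0 E1 E2 !eqxx.
-
  have Hb : forall r c : 'I_9, r < 3 -> c < 3 -> nat_of_ord (f r) = r /\ nat_of_ord (h c) = c.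
    move=> r c Hr Hc.
    have : std_entry r c = std_entry (f r) (h c).
      by rewrite -(std_val S2) ?Hr // V /= (std_val S1) // Hf.
    move/eqP; move: (allIP chk_b00 Hr) => /allIP /(_ _ Hc) /allIP /(_ _ (Hf _ Hr))
      /allIP /(_ _ (Hh _ Hc)) /implyP H /H /andP [/eqP <- /eqP <-] //.
  have Z0 : nat_of_ord (z9 0) < 3 by rewrite z9E.
  have h0 : h (z9 0) = z9 0 by apply/val_inj; case: (Hb _ _ Z0 Z0).
  have f0 : f (z9 0) = z9 0 by apply/val_inj; case: (Hb _ _ Z0 Z0).
  have Fr : forall r, f r = r.
    move=> r; apply/val_inj; apply/eqP.
    have : std_entry r 0 = std_entry (f r) 0.
      have T : nat_of_ord (C2 (r, z9 0)) = std_entry r (z9 0) by rewrite (std_val S2) ?z9E ?orbT.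
      rewrite z9E // in T; rewrite -T V /= h0.
      by rewrite (std_val S1) // z9E ?orbT.
    move/eqP; move: (allIP chk_col0 (ltn_ord r)) => /allIP /(_ _ (ltn_ord (f r))) /implyP H /H.
    by rewrite eq_sym.
  have Hc : forall c, h c = c.
    move=> c; apply/val_inj; apply/eqP.
    have : std_entry 0 c = std_entry 0 (h c).
      have T : nat_of_ord (C2 (z9 0, c)) = std_entry (z9 0) c by rewrite (std_val S2) ?z9E.
      rewrite z9E // in T; rewrite -T V /= f0.
      by rewrite (std_val S1) // z9E.
    move/eqP; move: (allIP chk_row0 (ltn_ord c)) => /allIP /(_ _ (ltn_ord (h c))) /implyP H /H.
    by rewrite eq_sym.
  by apply/ffunP => x; rewrite V Fr Hc; case: x.
Qed.

Lemma part_i B : semimagic B ->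
  exists2 g, g \in HGamma & semimagic (bact g B) && std_gnomon (bact g B).
Proof.
move=> HB; have R := Rel_Kof HB; have C := compat_Rel HB R.
have [w [Rw Cw Gw]] := normw_gen R C.
exists (gword w); first exact: gword_in.
rewrite bact_word; apply/andP; split; [exact: SM_of_Rel Rw Cw|exact: STD_of_Rel Rw Gw].
Qed.

Lemma det_check : all (fun ab : nat * nat => allI 72 (fun k =>
  (allI 3 (fun i => allI 3 (fun j => sqv k i j == std_entry (3*ab.1+i) (3*ab.2+j))))
    ==> (k == gnK ab.1 ab.2))) [:: (0,0); (0,1); (0,2); (1,0); (2,0)].
Proof. by vm_compute. Qed.

Lemma gn_of_std C K : Rel C K -> std_gnomon C -> gn K = stdT.
Proof.
move=> R S.
have D : forall a b, (a, b) \in [:: (0,0); (0,1); (0,2); (1,0); (2,0)] ->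
    a < 3 -> b < 3 -> (a == 0) || (b == 0) -> nat_of_ord (K a b) = gnK a b.
  move=> a b Hab Ha Hb H0.
  move: det_check => /allP /(_ _ Hab) /allIP /(_ _ (ltn_ord (K a b))) /implyP H.
  apply/eqP; apply: H.
  refine (allIP' _) => i Hi; refine (allIP' _) => j Hj.
  by rewrite -R // (std_val S) !inordK //; lia.
rewrite /gn !D //.
Qed.

Lemma Kl_val l a b : l \in sols16 -> nat_of_ord (Kl l a b) = nth 0 l (3*a+b).
Proof.
move=> Hl; rewrite /Kl inordK //.
have /andP [_ /allP H] := allP sols_lt l Hl.
case: (ltnP (3*a+b) (size l)) => Hn; last by rewrite nth_default.
by apply: H; rewrite mem_nth.
Qed.

Lemma compat_chk : all (fun l =>
  allI 3 (fun a => allI 3 (fun b => allI 3 (fun b' =>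
    (b != b') ==> rowc (nth 0 l (3*a+b)) (nth 0 l (3*a+b'))))) &&
  allI 3 (fun b => allI 3 (fun a => allI 3 (fun a' =>
    (a != a') ==> colc (nth 0 l (3*a+b)) (nth 0 l (3*a'+b)))))) sols16.
Proof. by vm_compute. Qed.
Lemma gn_chk : all (fun l => (nth 0 l 0, nth 0 l 1, nth 0 l 2, nth 0 l 3, nth 0 l 6) == stdT) sols16.
Proof. by vm_compute. Qed.

Lemma bd_good l : l \in sols16 -> semimagic (bd l) && std_gnomon (bd l).
Proof.
move=> Hl; apply/andP; split.
- apply: (SM_of_Rel (Rel_bd l)); split.
  + move=> a b b' Ha Hb Hb' Hbb; rewrite !Kl_val //.
    case/andP: (allP compat_chk l Hl) => H _.
    by move: (allIP (allIP (allIP H Ha) Hb) Hb') => /implyP; apply.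
  + move=> b a a' Hb Ha Ha' Haa; rewrite !Kl_val //.
    case/andP: (allP compat_chk l Hl) => _ H.
    by move: (allIP (allIP (allIP H Hb) Ha) Ha') => /implyP; apply.
- apply: (STD_of_Rel (Rel_bd l)); rewrite /gn !Kl_val //.
  by apply/eqP; apply: (allP gn_chk).
Qed.

Lemma Rel_eq B B' K K' : Rel B K -> Rel B' K' ->
  (forall a b, a < 3 -> b < 3 -> nat_of_ord (K a b) = nat_of_ord (K' a b)) -> B = B'.
Proof.
move=> R R' E; apply/ffunP => [[r c]]; apply/val_inj.
by rewrite /= (Rel_val _ _ R) (Rel_val _ _ R') E // div3_lt.
Qed.

Lemma Klist_nth (K : nat -> nat -> 'I_72) a b : a < 3 -> b < 3 ->
  nth 0 (Klist K) (3*a+b) = K a b.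
Proof.
move=> Ha Hb; rewrite /Klist (nth_map (0,0)) ?nth_pairs //.
by have -> : size pairs = 9 by []; lia.
Qed.

Lemma std_classify C : semimagic C -> std_gnomon C -> C \in map bd sols16.
Proof.
move=> HC SC; have R := Rel_Kof HC; have Cp := compat_Rel HC R.
have G := gn_of_std R SC.
have Hin := classify Cp G.
apply/mapP; exists (Klist (Kof C)) => //.
apply: (Rel_eq R (Rel_bd _)) => a b Ha Hb.
by rewrite Kl_val // Klist_nth.
Qed.

Lemma chk_sq_det : allI 72 (fun k => allI 72 (fun k' =>
  (allI 3 (fun i => allI 3 (fun j => sqv k i j == sqv k' i j))) ==> (k == k'))).
Proof. by vm_compute. Qed.
Lemma uniq_sols : uniq sols16. Proof. by vm_compute. Qed.

Lemma bd_inj : {in sols16 &, injective bd}.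
Proof.
move=> l1 l2 H1 H2 E.
have /andP [/eqP S1 _] := allP sols_lt l1 H1.
have /andP [/eqP S2 _] := allP sols_lt l2 H2.
have Hab : forall a b, a < 3 -> b < 3 -> nth 0 l1 (3*a+b) = nth 0 l2 (3*a+b).
  move=> a b Ha Hb; rewrite -!Kl_val //; apply/eqP.
  move: (allIP (allIP chk_sq_det (ltn_ord (Kl l1 a b))) (ltn_ord (Kl l2 a b))) => /implyP; apply.
  refine (allIP' _) => i Hi; refine (allIP' _) => j Hj.
  by rewrite -(Rel_bd l1) // -(Rel_bd l2) // E.
apply: (@eq_from_nth _ 0); first by rewrite S1 S2.
move=> n; rewrite S1 => Hn.
have En : 3 * (n %/ 3) + n %% 3 = n by rewrite mulnC -divn_eq.
have := Hab (n %/ 3) (n %% 3); rewrite En; apply; [rewrite ltn_divLR|apply: mod3_lt] => //.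
Qed.

Lemma card_std : #|[set C | semimagic C && std_gnomon C]| = 16.
Proof.
have -> : #|[set C | semimagic C && std_gnomon C]| = #|map bd sols16|.
  apply: eq_card => C; rewrite inE; apply/idP/idP; first by case/andP; apply: std_classify.
  by case/mapP => l Hl ->; apply: bd_good.
rewrite (card_uniqP _) ?size_map //.
by rewrite map_inj_in_uniq ?uniq_sols //; apply: bd_inj.
Qed.

Lemma nest_self B : B \in nest B.
Proof. by apply/imsetP; exists 1%g; rewrite ?group1 ?bact1. Qed.

Lemma nest_bact g B : g \in HGamma -> nest (bact g B) = nest B.
Proof.
move=> Hg; apply/setP => C; apply/imsetP/imsetP => [[h Hh ->]|[h Hh ->]].
- by exists (g * h)%g; rewrite ?groupM // bactM.
- exists (g^-1 * h)%g; first by rewrite groupM ?groupV.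
  by rewrite -bactM mulKVg.
Qed.

Lemma nest_std B C : C \in nest B -> std_gnomon C ->
  forall C', C' \in nest B -> std_gnomon C' -> C = C'.
Proof.
case/imsetP => g Hg -> S1 C' /imsetP [h Hh ->] S2.
apply: (std_unique (g := (g^-1 * h)%g)) => //; first by rewrite groupM ?groupV.
by rewrite -bactM mulKVg.
Qed.

Theorem theorem3p2 :
  (forall B : board, semimagic B ->
     exists2 g, g \in HGamma & semimagic (bact g B) && std_gnomon (bact g B))
  /\ #|[set nest B | B in semimagic_boards]| = 16
  /\ (forall B : board, semimagic B ->
        #|[set C in nest B | semimagic C && std_gnomon C]| = 1).
Proof.
split; first exact: part_i.
split.
- set S := [set C | semimagic C && std_gnomon C].
  have -> : [set nest B | B in semimagic_boards] = [set nest C | C in S].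
    apply/setP => N; apply/imsetP/imsetP => [[B HB ->]|[C HC ->]].
    + rewrite inE in HB; have [g Hg HgB] := part_i HB.
      by exists (bact g B); rewrite ?inE // nest_bact.
    + by exists C => //; rewrite inE; rewrite inE in HC; case/andP: HC.
  rewrite card_in_imset ?card_std // => C1 C2; rewrite !inE => /andP [_ S1] /andP [_ S2] E.
  apply: (nest_std (nest_self C1)) => //; rewrite E; exact: nest_self.
- move=> B HB; have [g Hg /andP [Hs Hst]] := part_i HB.
  have Hin : bact g B \in nest B by apply/imsetP; exists g.
  apply/eqP/cards1P; exists (bact g B); apply/setP => C; rewrite !inE.
  apply/idP/eqP => [/andP [HC /andP [_ SC]]|->].
  + exact: (nest_std HC SC Hin Hst).
  + by rewrite Hs Hst Hin.
Qed.
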